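(* Let $n\in\mathbb{N}=\{1,2,\dots\}$ and $0\le i\le n-1$. Then $$\int\frac{t^i}{i!}h_n(t)\,dt=-\frac{1}{n!}\sum_{k=0}^i\frac{(n-1-k)!}{2^{k+1}(i-k)!}\,t^{i-k}\,h_{n-1-k}(t),$$ i.e. the right-hand side is an antiderivative on $\mathbb{R}$ of $t\mapsto\frac{t^i}{i!}h_n(t)$.
   Context: $H_n$ denotes the $n$-th Hermite polynomial ($H_n(t)=(-1)^ne^{t^2}\frac{d^n}{dt^n}e^{-t^2}$), and the Hermite functions are $h_n(t)=\frac{1}{2^nn!\sqrt{\pi}}e^{-t^2}H_n(t)$, $t\in\mathbb{R}$. *)

(* Defs.v *)
From Stdlib Require Import Reals Arith Factorial.
From Coquelicot Require Import Coquelicot.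
Open Scope R_scope.

Definition hermiteH (n : nat) (t : R) : R :=
  (-1) ^ n * exp (t ^ 2) * Derive_n (fun s => exp (- s ^ 2)) n t.

Definition hermite_fun (n : nat) (t : R) : R :=
  / (2 ^ n * INR (fact n) * sqrt PI) * exp (- t ^ 2) * hermiteH n t.

Definition antideriv (n i : nat) (t : R) : R :=
  - / INR (fact n) *
  sum_f_R0 (fun k => INR (fact (n - 1 - k)) / (2 ^ (k + 1) * INR (fact (i - k)))
                     * t ^ (i - k) * hermite_fun (n - 1 - k) t) i.

(* Main.v *)
Require Import Defs.
From Stdlib Require Import Reals Arith Factorial Lra Lia.
From Coquelicot Require Import Coquelicot.
Open Scope R_scope.

Lemma dmul (f g : R -> R) x df dg : is_derive f x df -> is_derive g x dg ->
  is_derive (fun t => f t * g t) x (df * g x + f x * dg).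
Proof. intros H1 H2. apply (is_derive_mult f g x df dg H1 H2). intros; apply Rmult_comm. Qed.

Lemma dplus (f g : R -> R) x df dg : is_derive f x df -> is_derive g x dg ->
  is_derive (fun t => f t + g t) x (df + dg).
Proof. intros H1 H2. apply (is_derive_plus f g x df dg H1 H2). Qed.

Lemma dminus (f g : R -> R) x df dg : is_derive f x df -> is_derive g x dg ->
  is_derive (fun t => f t - g t) x (df - dg).
Proof. intros H1 H2. apply (is_derive_minus f g x df dg H1 H2). Qed.

Lemma dconst (a x : R) : is_derive (fun _ => a) x 0.
Proof. apply (is_derive_const a x). Qed.

Lemma did (x : R) : is_derive (fun t => t) x 1.
Proof. apply (is_derive_id x). Qed.

Lemma eqR (a b : R) : a = b -> a = b.
Proof. auto. Qed.

Lemma dval (f : R -> R) (x l l' : R) : is_derive f x l -> l = l' -> is_derive f x l'.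
Proof. intros H ->; exact H. Qed.

Fixpoint Hr (m : nat) : R -> R :=
  match m with
  | O => fun _ => 1
  | S m' => match m' with
            | O => fun t => 2 * t
            | S m'' => fun t => 2 * t * Hr m' t - 2 * INR (S m'') * Hr m'' t
            end
  end.

Definition D (m : nat) (t : R) : R :=
  match m with O => 0 | S m' => 2 * INR (S m') * Hr m' t end.

Lemma Hr_rec m t : Hr (S m) t = 2 * t * Hr m t - D m t.
Proof. destruct m; simpl; [ring | reflexivity]. Qed.

Lemma Hr_der m : forall t : R, is_derive (Hr m) t (D m t).
Proof.
  assert (H : forall m, (forall t : R, is_derive (Hr m) t (D m t)) /\
                         (forall t : R, is_derive (Hr (S m)) t (D (S m) t))).
  { clear m; intro m; induction m as [|m [IH1 IH2]].
    - split; intro t.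
      + apply dconst.
      + simpl. eapply dval. apply is_derive_scal. apply did. simpl; ring.
    - split; [exact IH2|]. intro t.
      apply is_derive_ext with (f := fun t => 2 * t * Hr (S m) t - D (S m) t).
      { intro s; change R in s. symmetry. apply Hr_rec. }
      eapply dval.
      { apply dminus.
        - apply dmul. apply is_derive_scal. apply did. apply IH2.
        - simpl. apply is_derive_scal. apply IH1. }
      change (D (S (S m)) t) with (2 * INR (S (S m)) * Hr (S m) t).
      change (D (S m) t) with (2 * INR (S m) * Hr m t).
      rewrite (Hr_rec m t). rewrite !S_INR. ring. }
  intro t. apply (H m).
Qed.

Definition E (m : nat) (t : R) : R := Hr m t * exp (- t ^ 2).

Lemma dgauss (t : R) : is_derive (fun s => exp (- s ^ 2)) t (- (2 * t) * exp (- t ^ 2)).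
Proof.
  auto_derive. exact I. replace (t * (t * 1)) with (t ^ 2) by ring. ring.
Qed.

Lemma E_der m (t : R) : is_derive (E m) t (- E (S m) t).
Proof.
  unfold E. eapply dval. apply dmul. apply Hr_der. apply dgauss.
  rewrite Hr_rec. ring.
Qed.

Lemma Derive_n_gauss m : forall t : R,
  Derive_n (fun s => exp (- s ^ 2)) m t = (-1) ^ m * E m t.
Proof.
  induction m as [|m IH]; intro t.
  - simpl. unfold E. simpl. ring.
  - change (Derive (Derive_n (fun s => exp (- s ^ 2)) m) t = (-1) ^ S m * E (S m) t). rewrite (Derive_ext _ (fun s => (-1) ^ m * E m s) t IH).
    apply is_derive_unique. eapply dval. apply is_derive_scal. apply E_der.
    simpl. ring.
Qed.

Lemma hermite_fun_E m t :
  hermite_fun m t = / (2 ^ m * INR (fact m) * sqrt PI) * E m t.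
Proof.
  unfold hermite_fun, hermiteH. rewrite Derive_n_gauss.
  assert (H1 : (-1) ^ m * (-1) ^ m = 1).
  { rewrite <- Rpow_mult_distr. replace (-1 * -1) with 1 by ring. apply pow1. }
  assert (H2 : exp (- t ^ 2) * exp (t ^ 2) = 1).
  { rewrite <- exp_plus. replace (- t ^ 2 + t ^ 2) with 0 by ring. apply exp_0. }
  transitivity (/ (2 ^ m * INR (fact m) * sqrt PI) * E m t *
     ((-1) ^ m * (-1) ^ m) * (exp (- t ^ 2) * exp (t ^ 2))).
  - ring.
  - rewrite H1, H2. ring.
Qed.

Definition Ssum (m i : nat) (t : R) : R :=
  sum_f_R0 (fun j => t ^ j / INR (fact j) * E (m + j) t) i.

Lemma Ssum_der m i (t : R) :
  is_derive (Ssum m i) t (- (t ^ i / INR (fact i) * E (m + i + 1) t)).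
Proof.
  induction i as [|i IH].
  - apply is_derive_ext with (f := fun s => E m s).
    { intro s; change R in s. apply eqR. unfold Ssum. cbn [sum_f_R0]. rewrite Nat.add_0_r. simpl. field. }
    eapply dval. apply E_der. rewrite Nat.add_0_r, Nat.add_1_r. simpl. field.
  - apply is_derive_ext with (f := fun s => Ssum m i s +
        (/ INR (fact (S i)) * s ^ (S i)) * E (m + S i) s).
    { intro s; change R in s. apply eqR. unfold Ssum. cbn [sum_f_R0]. unfold Rdiv. ring. }
    eapply dval. apply dplus. apply IH. apply dmul. apply is_derive_scal.
    apply is_derive_pow. apply did. apply E_der.
    replace (m + i + 1)%nat with (m + S i)%nat by lia.
    replace (m + S i + 1)%nat with (S (m + S i)) by lia.
    simpl pred. rewrite fact_simpl, mult_INR.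
    assert (INR (fact i) <> 0) by (apply INR_fact_neq_0).
    assert (INR (S i) <> 0) by (apply not_0_INR; lia).
    field. auto.
Qed.

Theorem lemma3p2 (n i : nat) (hn : (1 <= n)%nat) (hi : (i <= n - 1)%nat) :
  forall t : R,
    is_derive (antideriv n i) t (t ^ i / INR (fact i) * hermite_fun n t).
Proof.
  intro t.
  set (m := (n - 1 - i)%nat).
  assert (Hs : sqrt PI <> 0).
  { apply Rgt_not_eq. apply sqrt_lt_R0. apply PI_RGT_0. }
  assert (H2 : 2 ^ n <> 0) by (apply pow_nonzero; lra).
  assert (Hf : INR (fact n) <> 0) by apply INR_fact_neq_0.
  apply is_derive_ext with
    (f := fun s => - (/ (INR (fact n) * 2 ^ n * sqrt PI)) * Ssum m i s).
  { intro s; change R in s. unfold antideriv, Ssum.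
    rewrite <- (sum_f_R0_skip (fun j => s ^ j / INR (fact j) * E (m + j) s)).
    replace (- / (INR (fact n) * 2 ^ n * sqrt PI)) with
       (- / INR (fact n) * / (2 ^ n * sqrt PI)) by (field; auto).
    rewrite Rmult_assoc. f_equal. rewrite scal_sum. apply sum_eq.
    intros k Hk. rewrite hermite_fun_E.
    replace (m + (i - k))%nat with (n - 1 - k)%nat by (unfold m; lia).
    assert (Hp : 2 ^ n = 2 ^ (k + 1) * 2 ^ (n - 1 - k)).
    { rewrite <- pow_add. f_equal. lia. }
    rewrite Hp.
    assert (2 ^ (k + 1) <> 0) by (apply pow_nonzero; lra).
    assert (2 ^ (n - 1 - k) <> 0) by (apply pow_nonzero; lra).
    assert (INR (fact (n - 1 - k)) <> 0) by apply INR_fact_neq_0.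
    assert (INR (fact (i - k)) <> 0) by apply INR_fact_neq_0.
    field. repeat split; auto. }
  eapply dval. apply is_derive_scal. apply Ssum_der.
  replace (m + i + 1)%nat with n by (unfold m; lia).
  rewrite hermite_fun_E.
  assert (INR (fact i) <> 0) by apply INR_fact_neq_0.
  field. repeat split; auto.
Qed.
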